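(* Let $(T,A)$ be a uniform cocycle on a probability space $(\Delta,\mu)$ and, for $\kappa>0$, let $$\omega(\kappa)=\sup_{\mu(U)\le\kappa}\ \sup_{N>0}\int_U\frac1N\ln\|A_N(x)\|_0\,d\mu(x),$$ the first supremum being over measurable sets $U\subset\Delta$ with $\mu(U)\le\kappa$. Then $\lim_{\kappa\to0}\omega(\kappa)=0$.
   Context: A cocycle is a pair $(T,A)$ with $T:\Delta\to\Delta$ and $A:\Delta\to\mathrm{GL}(p,\mathbb{R})$, viewed as the skew product $(x,w)\mapsto(T(x),A(x)w)$; its iterates are $(T^n,A_n)$ with $A_n(x)=A(T^{n-1}(x))\cdots A(x)$. For $B\in\mathrm{GL}(p,\mathbb{R})$, $\|B\|_0=\max\{\|B\|,\|B^{-1}\|\}$. The cocycle is a uniform cocycle if $(\Delta,\mu)$ is a probability space, $\mu$ is a $T$-invariant ergodic measure ($T$ measurable), $A$ is measurable and $\int_\Delta\ln\|A(x)\|_0\,d\mu(x)<\infty$. *)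

(* Defs.v *)
From HB Require Import structures.
From mathcomp Require Import all_boot all_order all_algebra.
From mathcomp Require Import all_classical all_reals all_analysis.
Set Implicit Arguments. Unset Strict Implicit. Unset Printing Implicit Defensive.
Import Order.TTheory GRing.Theory Num.Theory.
Import numFieldNormedType.Exports.
Local Open Scope classical_set_scope.
Local Open Scope ring_scope.

Section Cocycle.
Context {R : realType}.

Definition vnorm {p : nat} (v : 'cV[R]_p) : R :=
  Num.sqrt (\sum_(i < p) (v i 0) ^+ 2).

Definition opnorm {p : nat} (B : 'M[R]_p) : R :=
  sup [set r | exists v : 'cV[R]_p, vnorm v <= 1 /\ r = vnorm (B *m v)].

Definition norm0 {p : nat} (B : 'M[R]_p) : R :=
  Num.max (opnorm B) (opnorm (invmx B)).

Fixpoint cocycle_iter {X : Type} {p : nat} (T : X -> X) (A : X -> 'M[R]_p)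
    (n : nat) (x : X) : 'M[R]_p :=
  match n with
  | 0 => 1%:M
  | n'.+1 => A (iter n' T x) *m cocycle_iter T A n' x
  end.

End Cocycle.

Section Uniform.
Local Open Scope ereal_scope.
Context {d : measure_display} {X : measurableType d} {R : realType}.

Definition invariant_measure (mu : probability X R) (T : X -> X) : Prop :=
  forall E, measurable E -> mu (T @^-1` E) = mu E.

Definition ergodic (mu : probability X R) (T : X -> X) : Prop :=
  forall E, measurable E -> T @^-1` E = E -> mu E = 0 \/ mu E = 1.

Definition uniform_cocycle {p : nat} (mu : probability X R) (T : X -> X)
    (A : X -> 'M[R]_p) : Prop :=
  measurable_fun setT T /\
  invariant_measure mu T /\
  ergodic mu T /\
  (forall x, A x \in unitmx) /\
  (forall i j, measurable_fun setT (fun x => A x i j)) /\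
  \int[mu]_x (ln (norm0 (A x)))%:E < +oo.

Definition omega {p : nat} (mu : probability X R) (T : X -> X)
    (A : X -> 'M[R]_p) (kappa : R) : \bar R :=
  ereal_sup [set s | exists U, measurable U /\ mu U <= kappa%:E /\
     s = ereal_sup [set t | exists N : nat, (0 < N)%N /\
        t = \int[mu]_(x in U) ((N%:R)^-1 * ln (norm0 (cocycle_iter T A N x)))%:E]].

End Uniform.

(* Main.v *)
Require Import Defs.
From HB Require Import structures.
From mathcomp Require Import all_boot all_order all_algebra.
From mathcomp Require Import all_classical all_reals all_analysis.
Import Order.TTheory GRing.Theory Num.Theory.
Import numFieldNormedType.Exports.
Local Open Scope classical_set_scope.
Local Open Scope ring_scope.
From mathcomp Require Import measurable_realfun.
From mathcomp Require Import ring.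
Section Mx.
Context {R : realType} {p : nat}.
Implicit Types (B C : 'M[R]_p) (v w : 'cV[R]_p).

Lemma vnorm_ge0 v : 0 <= vnorm v.
Proof. exact: sqrtr_ge0. Qed.

Lemma vnormZ (a : R) v : vnorm (a *: v) = `|a| * vnorm v.
Proof.
rewrite /vnorm (eq_bigr (fun i => a ^+ 2 * (v i 0) ^+ 2)); last first.
  by move=> i _; rewrite mxE exprMn.
by rewrite -mulr_sumr sqrtrM ?sqrtr_sqr // sqr_ge0.
Qed.

Lemma vnorm0 : vnorm (0 : 'cV[R]_p) = 0.
Proof.
rewrite /vnorm big1 ?sqrtr0 // => i _; by rewrite mxE expr0n.
Qed.

Lemma vnorm_coord v i : `|v i 0| <= vnorm v.
Proof.
rewrite /vnorm -sqrtr_sqr ler_wsqrtr // (bigD1 i) //= lerDl.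
by apply: sumr_ge0 => j _; exact: sqr_ge0.
Qed.

Lemma vnorm_le_l1 v : vnorm v <= \sum_i `|v i 0|.
Proof.
rewrite /vnorm -(@ger0_norm _ (\sum_i `|v i 0|)); last first.
  by apply: sumr_ge0 => i _.
rewrite -sqrtr_sqr ler_wsqrtr // expr2 big_distrl /=.
apply: ler_sum => i _; rewrite -[(v i 0) ^+ 2]ger0_norm ?sqr_ge0 // normrX expr2.
rewrite ler_wpM2l //.
by rewrite (bigD1 i) //= lerDl; apply: sumr_ge0.
Qed.

Definition l1 B := \sum_i \sum_j `|B i j|.

Lemma l1_ge0 B : 0 <= l1 B.
Proof. by apply: sumr_ge0 => i _; apply: sumr_ge0. Qed.

Lemma opset_bound B v : vnorm v <= 1 -> vnorm (B *m v) <= l1 B.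
Proof.
move=> v1; apply: (le_trans (vnorm_le_l1 _)); apply: ler_sum => i _.
rewrite mxE; apply: (le_trans (ler_norm_sum _ _ _)); apply: ler_sum => j _.
rewrite normrM ler_piMr //; exact: le_trans (vnorm_coord v j) v1.
Qed.

Definition opset B := [set r | exists v : 'cV[R]_p, vnorm v <= 1 /\ r = vnorm (B *m v)].

Lemma opset_sup B : has_sup (opset B).
Proof.
split; first by exists 0; exists 0; rewrite vnorm0 mulmx0 vnorm0; split.
by exists (l1 B) => r [v [v1 ->]]; exact: opset_bound.
Qed.

Lemma opnorm_ub B v : vnorm v <= 1 -> vnorm (B *m v) <= opnorm B.
Proof. by move=> v1; apply: sup_upper_bound (opset_sup B) _ _; exists v. Qed.

Lemma opnorm_ge0 B : 0 <= opnorm B.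
Proof. by rewrite -vnorm0 -(mulmx0 _ B); apply: opnorm_ub; rewrite vnorm0. Qed.

Lemma opnorm_le B c : (forall v, vnorm v <= 1 -> vnorm (B *m v) <= c) -> opnorm B <= c.
Proof.
move=> H; apply: ge_sup; first by case: (opset_sup B).
by move=> r [v [v1 ->]]; exact: H.
Qed.

Lemma opnorm_l1 B : opnorm B <= l1 B.
Proof. by apply: opnorm_le => v; exact: opset_bound. Qed.

Lemma opnorm_vec B w : vnorm (B *m w) <= opnorm B * vnorm w.
Proof.
have [w0|wn0] := eqVneq (vnorm w) 0.
  have -> : w = 0.
    apply/matrixP => i j; rewrite ord1 mxE; apply/normr0_eq0.
    by apply/le_anti; rewrite normr_ge0 andbT -w0 vnorm_coord.
  by rewrite mulmx0 vnorm0 mulr_ge0 // ?opnorm_ge0 // vnorm_ge0.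
have wp : 0 < vnorm w by rewrite lt_neqAle eq_sym wn0 vnorm_ge0.
have := opnorm_ub B ((vnorm w)^-1 *: w).
rewrite vnormZ -scalemxAr vnormZ ger0_norm ?invr_ge0 ?vnorm_ge0 //.
rewrite mulVf // lexx => /(_ isT).
by rewrite ler_pdivrMl // mulrC.
Qed.

Lemma opnormM B C : opnorm (B *m C) <= opnorm B * opnorm C.
Proof.
apply: opnorm_le => v v1; rewrite -mulmxA.
apply: (le_trans (opnorm_vec _ _)); apply: ler_wpM2l; first exact: opnorm_ge0.
by apply: (le_trans (opnorm_vec _ _)); rewrite ler_piMr // opnorm_ge0.
Qed.

Lemma opnorm1 : opnorm (1%:M : 'M[R]_p) <= 1.
Proof. by apply: opnorm_le => v; rewrite mul1mx. Qed.

Lemma entry_le_opnorm B i j : `|B i j| <= opnorm B.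
Proof.
have := opnorm_ub B (delta_mx j 0).
rewrite -colE.
have -> : vnorm (delta_mx j 0 : 'cV[R]_p) = 1.
  rewrite /vnorm (bigD1 j) //= big1 ?addr0; first by rewrite mxE !eqxx expr1n sqrtr1.
  by move=> k /negPf kj; rewrite mxE kj expr0n.
move=> /(_ (lexx _)); apply: le_trans.
by have := vnorm_coord (col j B) i; rewrite !mxE.
Qed.

Lemma l1_le B : l1 B <= (p * p)%:R * opnorm B.
Proof.
apply: (@le_trans _ _ (\sum_(i < p) \sum_(j < p) opnorm B)).
  by apply: ler_sum => i _; apply: ler_sum => j _; exact: entry_le_opnorm.
rewrite !sumr_const !card_ord natrM -mulrA mulr_natl.
by rewrite [p%:R * _]mulr_natl.
Qed.

Lemma invmxM B C : B \in unitmx -> C \in unitmx ->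
  invmx (B *m C) = invmx C *m invmx B.
Proof.
move=> uB uC; have uBC : B *m C \in unitmx by rewrite unitmx_mul uB uC.
have H : (B *m C) *m (invmx C *m invmx B) = 1%:M.
  by rewrite mulmxA -(mulmxA B) mulmxV // mulmx1 mulmxV.
by rewrite -[RHS]mul1mx -(mulVmx uBC) -mulmxA H mulmx1.
Qed.

Lemma norm0_ge0 B : 0 <= norm0 B.
Proof. by rewrite /norm0 le_max opnorm_ge0. Qed.

Lemma norm0M B C : B \in unitmx -> C \in unitmx ->
  norm0 (B *m C) <= norm0 B * norm0 C.
Proof.
move=> uB uC; rewrite /norm0 invmxM // ge_max; apply/andP; split.
  apply: (le_trans (opnormM _ _)); apply: ler_pM; rewrite ?opnorm_ge0 //.
  by rewrite le_max lexx. by rewrite le_max lexx.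
apply: (le_trans (opnormM _ _)); rewrite mulrC; apply: ler_pM; rewrite ?opnorm_ge0 //.
  by rewrite le_max lexx orbT. by rewrite le_max lexx orbT.
Qed.

Lemma norm0_1 : norm0 (1%:M : 'M[R]_p) <= 1.
Proof. by rewrite /norm0 invmx1 maxxx opnorm1. Qed.

Lemma norm0_ge1 B : (0 < p)%N -> B \in unitmx -> 1 <= norm0 B.
Proof.
move=> p0 uB.
have h1 : 1 <= opnorm (1%:M : 'M[R]_p).
  have := entry_le_opnorm (1%:M : 'M[R]_p) (Ordinal p0) (Ordinal p0).
  by rewrite mxE eqxx normr1.
have h2 := opnormM B (invmx B); rewrite mulmxV // in h2.
have h3 : 1 <= norm0 B * norm0 B.
  apply: (le_trans h1); apply: (le_trans h2); apply: ler_pM; rewrite ?opnorm_ge0 //.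
  by rewrite /norm0 le_max lexx. by rewrite /norm0 le_max lexx orbT.
rewrite leNgt; apply/negP => hlt.
have : norm0 B * norm0 B < 1.
  have := norm0_ge0 B => h0.
  apply: (le_lt_trans (y := norm0 B * 1)); first by rewrite ler_wpM2l // ltW.
  by rewrite mulr1.
by rewrite ltNge h3.
Qed.

Lemma opnorm_p0 B : p = 0%N -> opnorm B = 0.
Proof.
move=> hp; apply/le_anti; rewrite opnorm_ge0 andbT; apply: opnorm_le => v _.
rewrite /vnorm big1 ?sqrtr0 // => i; have := ltn_ord i; by rewrite [X in (_ < X)%N]hp.
Qed.

Lemma norm0_p0 B : p = 0%N -> norm0 B = 0.
Proof. by move=> hp; rewrite /norm0 !opnorm_p0 // maxxx. Qed.

Lemma ln_norm0_ge0 B : B \in unitmx -> 0 <= ln (norm0 B).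
Proof.
move=> uB; have [p0|pp] := posnP p.
  by rewrite norm0_p0 // ln0.
by apply: ln_ge0; apply: norm0_ge1.
Qed.

Lemma ln_prod n (F : nat -> R) : (forall k, 0 < F k) ->
  ln (\prod_(k < n) F k) = \sum_(k < n) ln (F k).
Proof.
move=> F0; elim: n => [|n IH]; first by rewrite !big_ord0 ln1.
rewrite !big_ord_recr /= lnM ?IH // posrE //.
by apply: prodr_gt0 => k _.
Qed.

End Mx.

Section Coc.
Context {R : realType} {p : nat} {X : Type} (T : X -> X) (A : X -> 'M[R]_p).
Hypothesis uA : forall x, A x \in unitmx.

Lemma cocycle_unit n x : cocycle_iter T A n x \in unitmx.
Proof. elim: n => [|n IH] /=; [exact: unitmx1 | by rewrite unitmx_mul uA IH]. Qed.

Lemma cocycle_norm0 n x :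
  norm0 (cocycle_iter T A n x) <= \prod_(k < n) norm0 (A (iter k T x)).
Proof.
elim: n => [|n IH] /=; first by rewrite big_ord0 norm0_1.
apply: le_trans; first exact: (norm0M _ _ (uA _) (cocycle_unit n x)).
rewrite big_ord_recr /= mulrC; apply: ler_wpM2r => //; exact: norm0_ge0.
Qed.

Lemma cocycle_ln n x :
  ln (norm0 (cocycle_iter T A n x)) <= \sum_(k < n) ln (norm0 (A (iter k T x))).
Proof.
have [p0|pp] := posnP p.
  by rewrite norm0_p0 // ln0 // sumr_ge0 // => k _; rewrite norm0_p0 // ln0.
have pos k : 0 < norm0 (A (iter k T x)).
  by apply: lt_le_trans (norm0_ge1 _ pp (uA _)).
rewrite -(@ln_prod _ n (fun k => norm0 (A (iter k T x)))) // ler_ln ?posrE ?cocycle_norm0 //.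
  by apply: lt_le_trans (norm0_ge1 _ pp (cocycle_unit _ _)).
by apply: prodr_gt0 => k _.
Qed.

End Coc.
Section Meas.
Context {d : measure_display} {X : measurableType d} {R : realType}.

Lemma det_meas m (F : X -> 'M[R]_m) :
  (forall i j, measurable_fun setT (fun x => F x i j)) ->
  measurable_fun setT (fun x => \det (F x)).
Proof.
move=> mF; rewrite /determinant.
apply: measurable_sum => s; apply: measurable_funM; first exact: measurable_cst.
by apply: measurable_prod => i _; exact: mF.
Qed.

Lemma adj_meas m (F : X -> 'M[R]_m) :
  (forall i j, measurable_fun setT (fun x => F x i j)) ->
  forall i j, measurable_fun setT (fun x => \adj (F x) i j).
Proof.
move=> mF i j; under eq_fun do rewrite mxE /cofactor.
apply: measurable_funM; first exact: measurable_cst.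
by apply: det_meas => k l; under eq_fun do rewrite !mxE; exact: mF.
Qed.

Variable p : nat.
Variable A : X -> 'M[R]_p.
Hypothesis uA : forall x, A x \in unitmx.
Hypothesis mA : forall i j, measurable_fun setT (fun x => A x i j).

Lemma inv_entry_meas i j : measurable_fun setT (fun x => `|invmx (A x) i j|).
Proof.
have e x : `|invmx (A x) i j| =
    `|\adj (A x) i j| * expR (- ln `|\det (A x)|).
  rewrite /invmx uA mxE normrM mulrC normfV expRN lnK //.
  by rewrite posrE normr_gt0 -unitfE -unitmxE.
rewrite (funext e); apply: measurable_funM.
  by apply: measurableT_comp => //; exact: adj_meas.
apply: measurableT_comp; first exact: measurable_expR.
apply: measurable_funN; apply: measurableT_comp; first exact: measurable_ln.
by apply: measurableT_comp => //; exact: det_meas.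
Qed.

Definition Gf x := ln (1 + l1 (A x) + l1 (invmx (A x))).

Lemma Gf_meas : measurable_fun setT Gf.
Proof.
apply: measurableT_comp; first exact: measurable_ln.
apply: measurable_funD; first apply: measurable_funD.
- exact: measurable_cst.
- apply: measurable_sum => i; apply: measurable_sum => j.
  by apply: measurableT_comp => //; exact: mA.
- apply: measurable_sum => i; apply: measurable_sum => j.
  exact: inv_entry_meas.
Qed.

Lemma Gf_ge0 x : 0 <= Gf x.
Proof. by apply: ln_ge0; rewrite -addrA lerDl addr_ge0 // l1_ge0. Qed.

Lemma f_le_Gf x : ln (norm0 (A x)) <= Gf x.
Proof.
have [p0|pp] := posnP p; first by rewrite norm0_p0 // ln0 // Gf_ge0.
rewrite /Gf ler_ln ?posrE.
- rewrite /norm0 ge_max; apply/andP; split.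
    rewrite -addrA ler_wpDl // ler_wpDr ?l1_ge0 // opnorm_l1 //.
  rewrite -addrA ler_wpDl // ler_wpDl ?l1_ge0 // opnorm_l1 //.
- exact: lt_le_trans (norm0_ge1 _ pp (uA x)).
- by rewrite -addrA ltr_pwDl // addr_ge0 // l1_ge0.
Qed.

Lemma Gf_le_f x : Gf x <= ln (norm0 (A x)) + ln (1 + 2 * (p * p)%:R).
Proof.
have key : 1 + l1 (A x) + l1 (invmx (A x)) <= 1 + 2 * (p * p)%:R * norm0 (A x).
  rewrite -addrA lerD2l.
  apply: le_trans (lerD (l1_le _) (l1_le _)) _.
  rewrite -mulrDr [2 * _]mulrC -mulrA ler_wpM2l // mulr_natl mulr2n.
  by apply: lerD; rewrite le_max lexx ?orbT.
have [p0|pp] := posnP p.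
  rewrite /Gf norm0_p0 // [ln 0]ln0 // add0r; move: key; rewrite norm0_p0 // mulr0 addr0 => key.
  rewrite [in X in _ <= X]p0 mul0n mulr0 addr0 ln1; apply: ln_le0 => //.
have n1 := norm0_ge1 _ pp (uA x).
have q0 : 0 < 1 + 2 * (p * p)%:R :> R.
  by apply: (lt_le_trans ltr01); rewrite lerDl mulr_ge0.
have n0 : 0 < norm0 (A x) by exact: lt_le_trans n1.
have g0 : 0 < 1 + l1 (A x) + l1 (invmx (A x)).
  by apply: (lt_le_trans ltr01); rewrite -addrA lerDl addr_ge0 // l1_ge0.
rewrite /Gf [X in _ <= X]addrC -lnM ?posrE // ler_ln ?posrE //; last exact: mulr_gt0.
apply: (le_trans key); rewrite [in X in _ <= X]mulrDl mul1r lerD2r.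
exact: n1.
Qed.

End Meas.

Section IPart.
Local Open Scope ereal_scope.

Section Gen.
Context {d : measure_display} {X : measurableType d} {R : realType}.

Lemma le_integral_any (mu : {measure set X -> \bar R}) D (f g : X -> \bar R) :
  (forall x, D x -> f x <= g x) ->
  \int[mu]_(x in D) f x <= \int[mu]_(x in D) g x.
Proof.
move=> fg; rewrite /integral.
have hr x : (f \_ D) x <= (g \_ D) x.
  by rewrite /patch; case: ifPn => // /set_mem /fg.
apply: leeB; apply: ereal_sup_le => _ [h /= hf <-]; exists h => //= x.
  apply: le_trans (hf x) _; apply: (@funepos_le _ _ setT) => //; exact: in_setT.
apply: le_trans (hf x) _; apply: (@funeneg_le _ _ setT) => //; exact: in_setT.
Qed.

End Gen.

Section Inv.
Context {d : measure_display} {X : measurableType d} {R : realType}.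
Variable mu : probability X R.
Variable T : X -> X.
Hypothesis mT : measurable_fun setT T.
Hypothesis invT : invariant_measure mu T.

Lemma miter k : measurable_fun setT (iter k T).
Proof.
elim: k => [|k IH] /=; first exact: measurable_id.
exact: (measurableT_comp mT IH).
Qed.

Lemma inv_iter k E : measurable E -> mu ((iter k T) @^-1` E) = mu E.
Proof.
elim: k E => [|k IH] E mE; first by [].
have -> : iter k.+1 T @^-1` E = iter k T @^-1` (T @^-1` E) by [].
rewrite IH ?invT //.
by rewrite -[X in measurable X]setTI; apply: mT.
Qed.

Lemma integral_iter k (g : X -> \bar R) : measurable_fun setT g ->
  (forall x, 0 <= g x) ->
  \int[mu]_x g (iter k T x) = \int[mu]_x g x.
Proof.
move=> mg g0.
have := @ge0_integral_pushforward _ _ X X R (iter k T) (miter k) mu setT g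
  measurableT mg (fun y _ => g0 y).
rewrite preimage_setT => <-.
apply: (eq_measure_integral mu); first exact: miter.
by move=> h E mE _; rewrite /= /pushforward inv_iter.
Qed.

End Inv.

Section UI.
Context {d : measure_display} {X : measurableType d} {R : realType}.
Variable mu : probability X R.
Variable T : X -> X.
Hypothesis mT : measurable_fun setT T.
Hypothesis invT : invariant_measure mu T.

Lemma ui (G : X -> R) : measurable_fun setT G -> (forall x, (0 <= G x)%R) ->
  \int[mu]_x (G x)%:E < +oo ->
  forall e : R, (0 < e)%R -> exists del : R, (0 < del)%R /\
   forall U, measurable U -> mu U <= del%:E -> forall k,
     \int[mu]_(x in U) (G (iter k T x))%:E <= e%:E.
Proof.
move=> mG G0 Gfin e e0.
pose fn (n : nat) x := (Num.max (G x - n%:R) 0)%R.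
have mfn n : measurable_fun setT (fn n).
  apply: measurable_maxr; last exact: measurable_cst.
  by apply: measurable_funB => //; exact: measurable_cst.
have fn0 n x : (0 <= fn n x)%R by rewrite /fn le_max lexx orbT.
have cvg0 : \int[mu]_x (fn n x)%:E @[n --> \oo] --> 0.
  have -> : 0 = \int[mu]_x (cst 0 x) by rewrite integral0.
  apply: (@dominated_cvg _ _ _ mu setT measurableT (fun n x => (fn n x)%:E)
     (cst 0) (fun x => (G x)%:E)).
  - by move=> n; apply/measurable_EFinP.
  - move=> x _; apply: cvg_near_cst.
    have := nbhs_infty_ger (G x); apply: filterS => n hn.
    by rewrite /fn /= max_r // subr_le0.
  - by [].
  - apply/integrableP; split; first exact/measurable_EFinP.
    under eq_integral do rewrite gee0_abs ?lee_fin //.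
    exact: Gfin.
  - move=> n x _; rewrite gee0_abs ?lee_fin // /fn ge_max G0 andbT.
    by rewrite lerBlDr lerDl.
have [M HM] : exists M : nat, \int[mu]_x (fn M x)%:E <= (e/2)%:E.
  move/fine_cvgP : cvg0 => [finf /cvgrPdist_le cvf].
  have e20 : (0 < e/2)%R by rewrite divr_gt0.
  have [n [hf hd]] := filter_ex (filterI finf (cvf _ e20)).
  exists n; move: hd; rewrite /= sub0r normrN -(fineK hf) lee_fin.
  by apply: le_trans; exact: ler_norm.
pose del := (e / (2 * (M%:R + 1)))%R.
have Mp : (0 < M%:R + 1 :> R)%R by rewrite ltr_wpDl.
exists del; split; first by rewrite divr_gt0 // mulr_gt0.
move=> U mU muU k.
have mGk : measurable_fun setT (fun x => G (iter k T x)).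
exact: measurableT_comp mG (miter T mT k).
have mfk : measurable_fun setT (fun x => fn M (iter k T x)).
  exact: measurableT_comp (mfn M) (miter T mT k).
apply: (@le_trans _ _ (\int[mu]_(x in U) ((M%:R)%:E + (fn M (iter k T x))%:E))).
  apply: ge0_le_integral => //.
  - by move=> x _; rewrite lee_fin.
  - apply/measurable_EFinP; exact: measurable_funTS.
  - apply: emeasurable_funD; first exact: measurable_cst.
    apply/measurable_EFinP; exact: measurable_funTS.
  - move=> x _; rewrite -EFinD lee_fin -lerBlDl /fn le_max lexx //.
rewrite ge0_integralD //; last 2 first.
- by move=> x _; rewrite lee_fin.
- apply/measurable_EFinP; exact: measurable_funTS.
rewrite integral_cst //.
have h1 : (M%:R)%:E * mu U <= (e / 2)%:E.
  apply: (@le_trans _ _ ((M%:R)%:E * del%:E)).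
    by apply: lee_wpmul2l; rewrite // lee_fin.
  rewrite -EFinM lee_fin /del.
  rewrite mulrA ler_pdivlMr //.
  have Mn : (M%:R + 1 != 0 :> R)%R by rewrite gt_eqF.
  have -> : (M%:R * e / (2 * (M%:R + 1)) * 2 = e * (M%:R / (M%:R + 1)))%R by field.
  apply: ler_piMr; first exact: ltW.
  by rewrite ler_pdivrMr // mul1r lerDl.
have h2 : \int[mu]_(x in U) (fn M (iter k T x))%:E <= (e / 2)%:E.
  apply: le_trans HM.
  rewrite -(@integral_iter _ _ _ mu T mT invT k (fun x => (fn M x)%:E)); last 2 first.
  - exact/measurable_EFinP.
  - by move=> x; rewrite lee_fin.
  apply: ge0_subset_integral => //.
  - exact/measurable_EFinP.
  - by move=> x _; rewrite lee_fin.
apply: le_trans (leeD h1 h2) _.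
by rewrite -EFinD lee_fin -splitr.
Qed.

End UI.

End IPart.

Theorem lemma2p2 (d : measure_display) (X : measurableType d) (R : realType)
  (p : nat) (mu : probability X R) (T : X -> X) (A : X -> 'M[R]_p) :
  uniform_cocycle mu T A ->
  omega mu T A kappa @[kappa --> 0^'+] --> 0%E.
Proof.
move=> [mT [invT [_ [uA [mA fint]]]]].
have G0 x : 0 <= Gf p A x by exact: Gf_ge0.
have mG : measurable_fun setT (Gf p A) by exact: Gf_meas.
have Gint : (\int[mu]_x (Gf p A x)%:E < +oo)%E.
  set c := ln (1 + 2 * (p * p)%:R : R).
  have c0 : 0 <= c by apply: ln_ge0; rewrite lerDl mulr_ge0.
  have h1 : (\int[mu]_x (Num.max (Gf p A x - c) 0)%:E <=
            \int[mu]_x (ln (norm0 (A x)))%:E)%E.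
    apply: le_integral_any => x _; rewrite lee_fin ge_max ln_norm0_ge0 // andbT.
    by rewrite lerBlDr; exact: Gf_le_f.
  have h2 : (\int[mu]_x (Gf p A x)%:E <=
      \int[mu]_x ((Num.max (Gf p A x - c) 0)%:E + c%:E))%E.
    apply: ge0_le_integral => //.
    - by move=> x _; rewrite lee_fin.
    - exact/measurable_EFinP.
    - apply: emeasurable_funD; last exact: measurable_cst.
      apply/measurable_EFinP; apply: measurable_maxr; last exact: measurable_cst.
      by apply: measurable_funB => //; exact: measurable_cst.
    - move=> x _; rewrite -EFinD lee_fin -lerBlDr le_max lexx //.
  rewrite ge0_integralD // in h2; last 2 first.
  - by move=> x _; rewrite lee_fin le_max lexx orbT.
  - apply/measurable_EFinP; apply: measurable_maxr; last exact: measurable_cst.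
    by apply: measurable_funB => //; exact: measurable_cst.
  rewrite integral_cst // in h2.
  apply: le_lt_trans h2 _; apply: lte_add_pinfty.
    exact: le_lt_trans h1 fint.
  apply: (@le_lt_trans _ _ (c%:E * 1)%E); last by rewrite mule1 ltry.
  apply: lee_wpmul2l; first by rewrite lee_fin.
  exact: probability_le1.
have key : forall e : R, 0 < e -> exists del : R, 0 < del /\
    forall kappa, kappa <= del -> (omega mu T A kappa <= e%:E)%E.
  move=> e e0.
  have [del [del0 Hdel]] := @ui _ _ _ mu T mT invT _ mG G0 Gint _ e0.
  exists del; split => // kappa hk.
  apply: ge_ereal_sup => _ [U [mU [muU ->]]].
  apply: ge_ereal_sup => _ [N [N0 ->]].
  have muU' : (mu U <= del%:E)%E by apply: le_trans muU _; rewrite lee_fin.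
  apply: (@le_trans _ _ (\int[mu]_(x in U) ((N%:R^-1)%:E *
        \sum_(k < N) (Gf p A (iter k T x))%:E))%E).
    apply: le_integral_any => x _.
    rewrite sumEFin -EFinM lee_fin ler_wpM2l ?invr_ge0 //.
    apply: le_trans (cocycle_ln T A uA N x) _; apply: ler_sum => k _.
    exact: (f_le_Gf _ _ uA).
  have mGk k : measurable_fun setT (fun x => Gf p A (iter k T x)).
    exact: measurableT_comp mG (miter T mT k).
  rewrite ge0_integralZl_EFin //.
  2: by move=> x _; rewrite sumEFin lee_fin; apply: sumr_ge0.
  2: by apply: emeasurable_sum => k; apply/measurable_EFinP; exact: measurable_funTS.
  rewrite ge0_integral_sum //.
  2: by move=> k; apply/measurable_EFinP; exact: measurable_funTS.
  2: by move=> k x _; rewrite lee_fin.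
  have hs : (\sum_(k < N) \int[mu]_(x in U) (Gf p A (iter k T x))%:E <=
      \sum_(k < N) e%:E)%E by apply: lee_sum => k _; exact: Hdel.
  apply: le_trans (lee_wpmul2l _ hs) _; first by rewrite lee_fin invr_ge0.
  rewrite sumEFin -EFinM lee_fin sumr_const card_ord -[e *+ N]mulr_natr mulrCA mulVf ?mulr1 //.
  by rewrite pnatr_eq0 -lt0n.
have low : forall kappa, 0 <= kappa -> (0 <= omega mu T A kappa)%E.
  move=> kappa k0; apply: le_ereal_sup_tmp.
  exists (ereal_sup [set t : \bar R | exists N : nat, (0 < N)%N /\
        t = \int[mu]_(x in set0) ((N%:R)^-1 * ln (norm0 (cocycle_iter T A N x)))%:E]%E).
    by exists set0; split; [exact: measurable0 | split; [rewrite measure0 lee_fin|]].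
  apply: le_ereal_sup_tmp; exists 0%E => //.
  by exists 1%N; split => //; rewrite integral_set0.
apply/fine_cvgP; split.
  have [del [del0 Hd]] := key 1 ltr01.
  near=> kappa.
  have k0 : 0 < kappa by near: kappa; exact: nbhs_right_gt.
  have kd : kappa <= del by near: kappa; exact: nbhs_right_le.
  rewrite ge0_fin_numE ?low ?ltW //.
  exact: le_lt_trans (Hd _ kd) (ltry _).
apply/cvgrPdist_le => e e0.
have [del [del0 Hd]] := key e e0.
near=> kappa.
have k0 : 0 < kappa by near: kappa; exact: nbhs_right_gt.
have kd : kappa <= del by near: kappa; exact: nbhs_right_le.
have l0 := low _ (ltW k0).
have fin : omega mu T A kappa \is a fin_num.
  by rewrite ge0_fin_numE //; exact: le_lt_trans (Hd _ kd) (ltry _).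
rewrite /= sub0r normrN ger0_norm ?fine_ge0 //.
by rewrite -lee_fin fineK // Hd.
Unshelve. all: by end_near.
Qed.
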